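(* For any circuit-level Pauli error corresponding to $e\in\mathcal P_{n(T+1)}$ in the spacetime code of a Clifford circuit, its syndrome bitstring $\vec s(e)$ with respect to the parity checks $\mathcal O^\perp$ of the measurement outcomes of the circuit equals $(\langle e,M(\vec u)\rangle)_{\vec u\in\mathcal O^\perp}$, the binary commutators with the measured spacetime stabilizer generators.
   Context: Pauli operators are taken without phases; $\langle A,B\rangle=0$ if $A,B$ commute and $1$ otherwise. A non-adaptive Clifford circuit on $n$ qubits has time steps $t=1,\dots,T$: at step $t$, Pauli measurements (if any) are performed at time slice $t-0.5$ and then a Clifford unitary $U_t$ is applied. For $t\le t'$ let $U_{t,t'}=U_{t'-1}\cdots U_t$ (identity if $t'=t$). The spacetime code has $n(T+1)$ qubits $(q,t-0.5)$, $t=1,\dots,T+1$; for $F\in\mathcal P_{n(T+1)}$, $F_{t-0.5}\in\mathcal P_n$ is its component at slice $t-0.5$, and $\kappa_{t-0.5}(O)$ places $O\in\mathcal P_n$ at slice $t-0.5$ with identity elsewhere. Cumulant and back-cumulant: $(\overrightarrow F)_{t-0.5}=\prod_{t'=1}^{t}U_{t',t}F_{t'-0.5}U_{t',t}^\dagger$ and $(\overleftarrow F)_{t-0.5}=\prod_{t'=t}^{T+1}U_{t,t'}^\dagger F_{t'-0.5}U_{t,t'}$. A circuit error inserting $e_t$ before step $t$ is the spacetime Pauli $e=\prod_t\kappa_{t-0.5}(e_t)$. The input is a codeword of a stabilizer code with generators $S^{(\mathrm{ini})}_1,\dots,S^{(\mathrm{ini})}_s$ (values recorded perfectly at the start), and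 the circuit measures $M^{(\mathrm{circ})}_1,\dots,M^{(\mathrm{circ})}_m$. Let $\vec E=(S^{(\mathrm{ini})}_1,\dots,S^{(\mathrm{ini})}_s,M^{(\mathrm{circ})}_1,\dots,M^{(\mathrm{circ})}_m)$, with $t_j$ the time step of measurement $E_j$ ($t_j=0$ for initial stabilizers), and $\vec o\in\mathbb Z_2^{s+m}$ the outcome vector. $\mathcal O^\perp$ is a set of parity checks $\vec u\in\mathbb Z_2^{s+m}$ with $\vec u\cdot\vec o=0$ deterministically in the noiseless circuit; the syndrome of a run is $(\vec u\cdot\vec o)_{\vec u\in\mathcal O^\perp}$, and $\vec s(e)$ is the syndrome produced when error $e$ occurs. Measured spacetime stabilizer generators: $M(\vec u)=\overleftarrow{\prod_{j=s+1}^{s+m}\kappa_{t_j-0.5}(E_j^{u_j})}$. Known fact (effect of faults): with error $e$ the outcome distribution becomes $\mathbb P^{(e)}(\vec o)=\mathbb P(\vec o+\vec f(e))$, where $\mathbb P$ is the noiseless distribution, $f(e)_j=0$ for $j\le s$, and $f(e)_{s+i}=\langle(\overrightarrow e)_{t_{s+i}-0.5},M^{(\mathrm{circ})}_i\rangle$. *)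

(* Defs.v *)
From mathcomp Require Import all_boot all_order all_algebra.
Set Implicit Arguments. Unset Strict Implicit. Unset Printing Implicit Defensive.
Import GRing.Theory.
Local Open Scope ring_scope.

(* Phaseless n-qubit Pauli operator: binary symplectic row vector (x | z). *)
Definition pauli (n : nat) := 'rV['F_2]_(n + n).

Definition sympJ (n : nat) : 'M['F_2]_(n + n) := block_mx 0 1%:M 1%:M 0.

(* <A,B> = x_A . z_B + z_A . x_B : 0 iff A,B commute, 1 otherwise. *)
Definition pcomm (n : nat) (A B : pauli n) : 'F_2 := (A *m sympJ n *m B^T) 0 0.

(* A Clifford unitary U acts (by conjugation P |-> U P U^dag) on phaseless
   Paulis as a symplectic matrix S, in row-vector convention P |-> P *m S. *)
Definition symplectic (n : nat) (S : 'M['F_2]_(n + n)) : Prop :=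
  S *m sympJ n *m S^T = sympJ n.

(* Conjugation action of U_{t,t'} = U_{t'-1} ... U_t (identity if t = t'),
   where S t is the symplectic action of U_t (paper time indices t = 1..T). *)
Definition Uprod (n : nat) (S : nat -> 'M['F_2]_(n + n)) (t t' : nat)
  : 'M['F_2]_(n + n) := \prod_(t <= i < t') S i.

(* Spacetime Pauli on n(T+1) qubits, given slice by slice:
   index j : 'I_T.+1 is the time slice (j+1) - 0.5 = j + 0.5. *)
Definition stpauli (n T : nat) := {ffun 'I_T.+1 -> pauli n}.

Definition stcomm (n T : nat) (E F : stpauli n T) : 'F_2 :=
  \sum_(j < T.+1) pcomm (E j) (F j).

Definition kappa (n T : nat) (j : 'I_T.+1) (O : pauli n) : stpauli n T :=
  [ffun j' => if j' == j then O else 0].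

(* Cumulant: (F->)_{t-0.5} = prod_{t'=1}^{t} U_{t',t} F_{t'-0.5} U_{t',t}^dag
   (slice j <-> t = j+1). Products of phaseless Paulis are sums. *)
Definition cumulant (n T : nat) (S : nat -> 'M['F_2]_(n + n)) (F : stpauli n T)
  : stpauli n T :=
  [ffun j : 'I_T.+1 => \sum_(j' < T.+1 | (j' <= j)%N) F j' *m Uprod S j'.+1 j.+1].

Definition backcumulant (n T : nat) (S : nat -> 'M['F_2]_(n + n)) (F : stpauli n T)
  : stpauli n T :=
  [ffun j : 'I_T.+1 =>
     \sum_(j' < T.+1 | (j <= j')%N) F j' *m invmx (Uprod S j.+1 j'.+1)].

Definition dotv (k : nat) (u v : 'rV['F_2]_k) : 'F_2 := (u *m v^T) 0 0.

(* Measured spacetime stabilizer generator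
   M(u) = back-cumulant of prod_{i} kappa_{t_{s+i}-0.5}(M^circ_i ^ u_{s+i}).
   tm i : 'I_T.+1 is the slice index of the i-th circuit measurement. *)
Definition Mgen (n T s m : nat) (S : nat -> 'M['F_2]_(n + n))
  (Mc : 'I_m -> pauli n) (tm : 'I_m -> 'I_T.+1) (u : 'rV['F_2]_(s + m))
  : stpauli n T :=
  backcumulant S (\sum_(i < m) kappa (tm i) (u 0 (rshift s i) *: Mc i)).

Definition flipvec (n T s m : nat) (S : nat -> 'M['F_2]_(n + n))
  (Mc : 'I_m -> pauli n) (tm : 'I_m -> 'I_T.+1) (e : stpauli n T)
  : 'rV['F_2]_(s + m) :=
  row_mx (0 : 'rV['F_2]_s) (\row_(i < m) pcomm (cumulant S e (tm i)) (Mc i)).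

(* Main.v *)
Require Import Defs.
From mathcomp Require Import all_boot all_order all_algebra.
Import GRing.Theory Num.Theory.
Local Open Scope ring_scope.
Set Implicit Arguments. Unset Strict Implicit.
Lemma sympJ2 n : sympJ n *m sympJ n = 1%:M.
Proof. by rewrite /sympJ mulmx_block !mulmx0 !mul0mx !mulmx1 !addr0 !add0r -scalar_mx_block. Qed.

Lemma sympl_unit n (U : 'M['F_2]_(n+n)) : symplectic U -> U \in unitmx.
Proof.
move=> h; have := h; move=> _.
have : U *m (sympJ n *m U^T *m sympJ n) = 1%:M by rewrite !mulmxA h sympJ2.
by case/mulmx1_unit.
Qed.

Lemma sympl1 n : symplectic (1%:M : 'M['F_2]_(n+n)).
Proof. by rewrite /symplectic mul1mx trmx1 mulmx1. Qed.

Lemma symplM n (A B : 'M['F_2]_(n+n)) : symplectic A -> symplectic B -> symplectic (A *m B).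
Proof.
rewrite /symplectic => hA hB.
by rewrite trmx_mul -!mulmxA [B *m _]mulmxA [B *m _ *m _]mulmxA hB mulmxA.
Qed.

Lemma Uprod_sympl n (S : nat -> 'M['F_2]_(n + n)) a b :
  (forall i, (a <= i < b)%N -> symplectic (S i)) -> symplectic (Uprod S a b).
Proof.
elim: b => [|b IH] h.
  by rewrite /Uprod big_geq //; exact: sympl1.
case: (leqP a b) => hab.
  rewrite /Uprod big_nat_recr //=; apply: symplM.
    by apply: IH => i /andP[h1 h2]; apply: h; rewrite h1 ltnS ltnW.
  by apply: h; rewrite hab leqnn.
by rewrite /Uprod big_geq //; exact: sympl1.
Qed.

Lemma pcommDl n (A B C : pauli n) : pcomm (A + B) C = pcomm A C + pcomm B C.
Proof. by rewrite /pcomm !mulmxDl mxE. Qed.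
Lemma pcommDr n (A B C : pauli n) : pcomm C (A + B) = pcomm C A + pcomm C B.
Proof. by rewrite /pcomm linearD /= !mulmxDr mxE. Qed.
Lemma pcommZl n a (A C : pauli n) : pcomm (a *: A) C = a * pcomm A C.
Proof. by rewrite /pcomm -!scalemxAl mxE. Qed.
Lemma pcommZr n a (A C : pauli n) : pcomm C (a *: A) = a * pcomm C A.
Proof. by rewrite /pcomm linearZ /= -!scalemxAr mxE. Qed.
Lemma pcomm0l n (C : pauli n) : pcomm 0 C = 0.
Proof. by rewrite /pcomm !mul0mx mxE. Qed.
Lemma pcomm0r n (C : pauli n) : pcomm C 0 = 0.
Proof. by rewrite /pcomm trmx0 !mulmx0 mxE. Qed.
Lemma pcomm_suml n I (r : seq I) (P : pred I) (F : I -> pauli n) C :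
  pcomm (\sum_(i <- r | P i) F i) C = \sum_(i <- r | P i) pcomm (F i) C.
Proof. elim: r => [|x r IH]; rewrite ?big_nil ?big_cons ?pcomm0l //; by case: (P x); rewrite ?pcommDl IH. Qed.
Lemma pcomm_sumr n I (r : seq I) (P : pred I) (F : I -> pauli n) C :
  pcomm C (\sum_(i <- r | P i) F i) = \sum_(i <- r | P i) pcomm C (F i).
Proof. elim: r => [|x r IH]; rewrite ?big_nil ?big_cons ?pcomm0r //; by case: (P x); rewrite ?pcommDr IH. Qed.

Lemma pcomm_move n (U : 'M['F_2]_(n+n)) (A B : pauli n) : symplectic U ->
  pcomm (A *m U) B = pcomm A (B *m invmx U).
Proof.
move=> h; have hu := sympl_unit h.
have e : U *m sympJ n = sympJ n *m (invmx U)^T.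
  have h' : U *m sympJ n *m U^T = sympJ n := h.
  rewrite -[in RHS]h' -!mulmxA -trmx_mul mulVmx // trmx1 mulmx1 //.
by rewrite /pcomm -(mulmxA A U) e trmx_mul !mulmxA.
Qed.
Lemma core n T s m (S : nat -> 'M['F_2]_(n + n))
  (HS : forall t, (1 <= t <= T)%N -> symplectic (S t))
  (Mc : 'I_m -> pauli n) (tm : 'I_m -> 'I_T.+1) (e : stpauli n T) u :
  dotv u (@flipvec n T s m S Mc tm e) = stcomm e (@Mgen n T s m S Mc tm u).
Proof.
pose X := \sum_(i < m) \sum_(j < T.+1 | (j <= tm i)%N)
   pcomm (e j) ((u 0 (rshift s i) *: Mc i) *m invmx (Uprod S j.+1 (tm i).+1)).
have HU : forall j j' : 'I_T.+1, (j <= j')%N -> symplectic (Uprod S j.+1 j'.+1).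
  move=> j j' hj; apply: Uprod_sympl => i /andP[h1 h2]; apply: HS.
  rewrite (leq_trans _ h1) //=; rewrite ltnS in h2; exact: leq_trans h2 (ltnSE (ltn_ord j')).
transitivity X.
  rewrite /dotv /flipvec mxE big_split_ord /= big1 ?add0r; last first.
    by move=> i _; rewrite mxE row_mxEl mxE mulr0.
  apply: eq_bigr => i _; rewrite mxE row_mxEr mxE ffunE pcomm_suml mulr_sumr.
  apply: eq_bigr => j hj; rewrite (pcomm_move _ _ (HU _ _ hj)).
  by rewrite -scalemxAl pcommZr.

rewrite /stcomm /Mgen /X.
have inner : forall j : 'I_T.+1,
  backcumulant S (\sum_(i < m) kappa (tm i) (u 0 (rshift s i) *: Mc i)) j =
  \sum_(i < m) (if (j <= tm i)%N then (u 0 (rshift s i) *: Mc i) *m invmx (Uprod S j.+1 (tm i).+1) else 0).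
  move=> j; rewrite ffunE.
  under eq_bigr do rewrite sum_ffunE mulmx_suml.
  rewrite exchange_big /=; apply: eq_bigr => i _.
  rewrite big_mkcond /= (bigD1 (tm i)) //= big1 ?addr0.
    by rewrite ffunE eqxx.
  by move=> k hk; rewrite ffunE (negbTE hk) mul0mx if_same.

rewrite (eq_bigr _ (fun j _ => congr1 (pcomm (e j)) (inner j))).
under eq_bigr do rewrite pcomm_sumr.
rewrite exchange_big /=; apply: eq_bigr => i _.
rewrite big_mkcond /=; apply: eq_bigr => j _.
by case: ifP => //; rewrite pcomm0r.
Qed.

Theorem lemma14
  (R : numDomainType) (n T s m : nat)
  (S : nat -> 'M['F_2]_(n + n))
  (HS : forall t, (1 <= t <= T)%N -> symplectic (S t))
  (Sini : 'I_s -> pauli n)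
  (Mc : 'I_m -> pauli n) (tm : 'I_m -> 'I_T.+1)
  (P : 'rV['F_2]_(s + m) -> R)
  (HP0 : forall o, 0 <= P o)
  (HP1 : \sum_o P o = 1)
  (Operp : {set 'rV['F_2]_(s + m)})
  (Hchecks : forall o, P o != 0 -> forall u, u \in Operp -> dotv u o = 0)
  (e : stpauli n T) :
  forall o : 'rV['F_2]_(s + m),
    0 < P (o + @flipvec n T s m S Mc tm e) ->
    forall u, u \in Operp -> dotv u o = stcomm e (@Mgen n T s m S Mc tm u).
Proof.
move=> o hP u hu.
have h0 := Hchecks _ (lt0r_neq0 hP) u hu.
rewrite -(core HS Mc tm e u).
move: h0; rewrite /dotv linearD /= mulmxDr mxE.
set x := (u *m o^T) 0 0; set y := (u *m _) 0 0 => h.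
have two : (2%:R : 'F_2) = 0 by apply/val_inj.
by rewrite -[x]addr0 -h addrA -mulr2n -mulr_natr two mulr0 add0r.
Qed.
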